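(* Let $(J,[\cdot,\cdot],\alpha)$ be a Hom-Jacobi-Jordan algebra, $V$ a vector space with a linear map $\beta\colon V\to V$, and $\rho\colon J\to\mathrm{End}(V)$ a linear map such that for all $x,y\in J$: $\rho(\alpha(x))\circ\beta=\beta\circ\rho(x)$ and $\rho([x,y])\circ\beta=-\rho(\alpha(x))\circ\rho(y)-\rho(\alpha(y))\circ\rho(x)$. Define $d^1$ on linear maps $f\colon J\to V$ with $\beta\circ f=f\circ\alpha$ by $d^1(f)(x,y)=f([x,y])-\rho(x)f(y)-\rho(y)f(x)$, and $d^2$ on symmetric bilinear maps $g\colon J\times J\to V$ by $d^2(g)(x,y,z)=g(\alpha(x),[y,z])+g(\alpha(y),[x,z])+g(\alpha(z),[x,y])+\rho(\alpha(x))g(y,z)+\rho(\alpha(y))g(x,z)+\rho(\alpha(z))g(x,y)$. Then $d^2(d^1(f))=0$ for every linear $f\colon J\to V$ with $\beta\circ f=f\circ\alpha$.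
   Context: A Hom-Jacobi-Jordan algebra is a triple $(J,[\cdot,\cdot],\alpha)$ with $J$ a vector space, $[\cdot,\cdot]$ a symmetric bilinear map and $\alpha$ linear, such that $\alpha([x,y])=[\alpha(x),\alpha(y)]$ and $[\alpha(x),[y,z]]+[\alpha(y),[z,x]]+[\alpha(z),[x,y]]=0$ for all $x,y,z\in J$. *)

(* Defs.v *)
From HB Require Import structures.
From mathcomp Require Import all_boot all_order all_algebra.
Set Implicit Arguments. Unset Strict Implicit. Unset Printing Implicit Defensive.
Import GRing.Theory.
Local Open Scope ring_scope.

Definition is_linear (K : fieldType) (U W : lmodType K) (f : U -> W) : Prop :=
  forall (a : K) (u v : U), f (a *: u + v) = a *: f u + f v.

Definition sym_bilinear (K : fieldType) (U W : lmodType K) (b : U -> U -> W) : Prop :=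
  (forall x y, b x y = b y x) /\
  (forall (a : K) x y z, b (a *: x + y) z = a *: b x z + b y z) /\
  (forall (a : K) x y z, b x (a *: y + z) = a *: b x y + b x z).

Definition HomJacobiJordan (K : fieldType) (J : lmodType K)
    (br : J -> J -> J) (alpha : J -> J) : Prop :=
  [/\ sym_bilinear br, is_linear alpha,
      (forall x y, alpha (br x y) = br (alpha x) (alpha y)) &
      (forall x y z, br (alpha x) (br y z) + br (alpha y) (br z x)
                     + br (alpha z) (br x y) = 0)].

Definition is_linear_rep (K : fieldType) (J V : lmodType K) (rho : J -> V -> V) : Prop :=
  (forall x, is_linear (rho x)) /\
  (forall (a : K) x y v, rho (a *: x + y) v = a *: rho x v + rho y v).

Definition d1 (K : fieldType) (J V : lmodType K) (br : J -> J -> J)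
    (rho : J -> V -> V) (f : J -> V) : J -> J -> V :=
  fun x y => f (br x y) - rho x (f y) - rho y (f x).

Definition d2 (K : fieldType) (J V : lmodType K) (br : J -> J -> J) (alpha : J -> J)
    (rho : J -> V -> V) (g : J -> J -> V) : J -> J -> J -> V :=
  fun x y z => g (alpha x) (br y z) + g (alpha y) (br x z) + g (alpha z) (br x y)
             + rho (alpha x) (g y z) + rho (alpha y) (g x z) + rho (alpha z) (g x y).

(* Main.v *)
Require Import Defs.
From HB Require Import structures.
From mathcomp Require Import all_boot all_order all_algebra.
Import GRing.Theory.
Local Open Scope ring_scope.

Lemma lin_props (K : fieldType) (U W : lmodType K) (g : U -> W) :
  is_linear g ->
  [/\ g 0 = 0, (forall u v, g (u + v) = g u + g v) & (forall u, g (- u) = - g u)].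
Proof.
move=> hg.
have gD u v : g (u + v) = g u + g v by rewrite -[u]scale1r hg !scale1r.
have g0 : g 0 = 0.
  by have := hg (-1) 0 0; rewrite scaler0 addr0 scaleN1r addNr.
split=> // u.
by have := hg (-1) u 0; rewrite !addr0 g0 addr0 !scaleN1r.
Qed.

Theorem theorem2p7 (K : fieldType) (J V : lmodType K)
    (br : J -> J -> J) (alpha : J -> J) (beta : V -> V) (rho : J -> V -> V)
    (hJ : HomJacobiJordan br alpha)
    (hbeta : is_linear beta)
    (hrho : is_linear_rep rho)
    (hrho1 : forall (x : J) (v : V), rho (alpha x) (beta v) = beta (rho x v))
    (hrho2 : forall (x y : J) (v : V),
        rho (br x y) (beta v) = - rho (alpha x) (rho y v) - rho (alpha y) (rho x v))
    (f : J -> V) (hf : is_linear f) (hfa : forall x, beta (f x) = f (alpha x)) :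
  forall x y z : J, d2 br alpha rho (d1 br rho f) x y z = 0.
Proof.
move=> x y z.
case: hJ => [[bC _]] _ _ jac.
case: hrho => hr _.
have [f0 fD fN] := @lin_props _ _ _ f hf.
have rD a u v : rho a (u + v) = rho a u + rho a v by case: (@lin_props _ _ _ (rho a) (hr a)).
have rN a u : rho a (- u) = - rho a u by case: (@lin_props _ _ _ (rho a) (hr a)).
rewrite /d2 /d1 -!hfa !hrho2.
have hj := jac x y z.
rewrite (bC z x) in hj.
have : f (br (alpha x) (br y z) + br (alpha y) (br x z) + br (alpha z) (br x y)) = 0
  by rewrite hj f0.
rewrite !fD => hF.
rewrite !rD !rN.
move: hF.
set a1 := f (br (alpha x) (br y z)); set a2 := f (br (alpha y) (br x z)); set a3 := f (br (alpha z) (br x y)).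
set b1 := rho (alpha x) (f (br y z)); set b2 := rho (alpha y) (f (br x z)); set b3 := rho (alpha z) (f (br x y)).
set c1 := rho (alpha y) (rho z (f x)); set c2 := rho (alpha z) (rho y (f x)).
set c3 := rho (alpha x) (rho z (f y)); set c4 := rho (alpha z) (rho x (f y)).
set c5 := rho (alpha x) (rho y (f z)); set c6 := rho (alpha y) (rho x (f z)).
move=> hF.
rewrite !opprD !opprK !addrA.
rewrite (GRing.add).[ACl ((((((((((1*5*9)*(2*13))*(6*16))*(10*19))*(3*18))*(4*21))*(7*15))*(8*20))*(11*14))*(12*17))].
by rewrite /= !addNr !subrr !addr0.
Qed.
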